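(* Let $G$ be a tree on $n$ vertices $1,2,\ldots,n$ with edges $e_1,\ldots,e_{n-1}$ and incidence matrix $M$, and let $S=M^TM$ be its signless edge-Laplacian. Then the Moore-Penrose inverse $S^+=[s^+_{i,j}]$ of $S$ is given by $$s^+_{i,j}=\frac{(-1)^{d(e_i,e_j)}}{n}\begin{cases}|G_H(e_i)|\,|G_T(e_i)| & \text{if } e_i=e_j,\\ -|G[e_i,e_j)|\,|G(e_i,e_j]| & \text{if } e_i\neq e_j.\end{cases}$$
   Context: The incidence matrix $M$ is the $n\times(n-1)$ matrix with $(i,j)$-entry $1$ if vertex $i$ is incident with edge $e_j$ and $0$ otherwise. Each edge is written $e_i=\{l_i,m_i\}$ with $l_i<m_i$. The head component $G_H(e_i)$ is the component of $G\setminus e_i$ containing $m_i$ and the tail component $G_T(e_i)$ the one containing $l_i$; $|X|$ is the number of vertices of $X$. For a vertex $j$ and edge $e_i=\{l_i,m_i\}$, $d(j,e_i)=d(e_i,j):=\min\{d(j,l_i),d(j,m_i)\}$ (graph distance), and for edges $d(e_i,e_k):=\min\{d(l_i,e_k),d(m_i,e_k)\}$. For distinct edges $e_i,e_j$, $G\setminus\{e_i,e_j\}$ has three components: $G[e_i,e_j)$ is the component containing an endpoint of $e_i$ but no endpoint of $e_j$, and $G(e_i,e_j]$ is the component containing an endpoint of $e_j$ but no endpoint of $e_i$. The Moore-Penrose inverse of a real matrix $A$ is the unique $A^+$ with $AA^+A=A$, $A^+AA^+=A^+$, $(AA^+)^T=AA^+$, $(A^+A)^T=A^+A$. *)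

(* Defs.v *)
From mathcomp Require Import all_boot all_order all_algebra.
Set Implicit Arguments. Unset Strict Implicit. Unset Printing Implicit Defensive.
Import Order.TTheory GRing.Theory Num.Theory.
Local Open Scope ring_scope.

Section Tree.
Variables (n k : nat) (l m : 'I_k -> 'I_n).
(* A graph on vertex set 'I_n with edges e_i = {l i, m i}, i : 'I_k.
   [gadj P] is the adjacency relation of the subgraph keeping only the
   edges i with P i (used for G, G \ e_i, G \ {e_i, e_j}). *)
Definition gadj (P : pred 'I_k) : rel 'I_n := fun x y =>
  [exists i : 'I_k, P i &&
     (((x == l i) && (y == m i)) || ((x == m i) && (y == l i)))].

Definition Gadj : rel 'I_n := gadj predT.

Definition is_tree : Prop :=
  (forall x y, connect Gadj x y) /\
  (forall i, ~~ connect (gadj (predC1 i)) (l i) (m i)).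

Definition dist (x y : 'I_n) : nat :=
  find (fun len => [exists p : len.-tuple 'I_n, path Gadj x p && (last x p == y)])
       (iota 0 n).

Definition dist_ve (x : 'I_n) (i : 'I_k) : nat := minn (dist x (l i)) (dist x (m i)).
Definition dist_ee (i j : 'I_k) : nat := minn (dist_ve (l i) j) (dist_ve (m i) j).

Definition headC (i : 'I_k) : {set 'I_n} := [set v | connect (gadj (predC1 i)) (m i) v].
Definition tailC (i : 'I_k) : {set 'I_n} := [set v | connect (gadj (predC1 i)) (l i) v].

(* G[e_i, e_j): vertices of the component(s) of G \ {e_i, e_j} containing an
   endpoint of e_i but no endpoint of e_j *)
Definition compL (i j : 'I_k) : {set 'I_n} :=
  let r := gadj [pred t | (t != i) && (t != j)] in
  [set v | (connect r (l i) v || connect r (m i) v)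
           && ~~ connect r v (l j) && ~~ connect r v (m j)].

Definition incidence (R : nzRingType) : 'M[R]_(n, k) :=
  \matrix_(v, j) (((v == l j) || (v == m j)) : nat)%:R.

Definition Splus (R : fieldType) : 'M[R]_k :=
  \matrix_(i, j) ((-1) ^+ dist_ee i j / n%:R *
     (if i == j then (#|headC i| * #|tailC i|)%:R
      else - (#|compL i j| * #|compL j i|)%:R)).
End Tree.

Definition is_MP_inverse (R : nzRingType) (p q : nat)
  (A : 'M[R]_(p, q)) (X : 'M[R]_(q, p)) : Prop :=
  [/\ A *m X *m A = A, X *m A *m X = X,
      (A *m X)^T = A *m X & (X *m A)^T = X *m A].

(* Main.v *)
Require Import Defs.
From mathcomp Require Import all_boot all_order all_algebra.
From mathcomp Require Import zify ring lra.
Set Implicit Arguments. Unset Strict Implicit. Unset Printing Implicit Defensive.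
Import Order.TTheory GRing.Theory Num.Theory.
Local Open Scope ring_scope.

Lemma connect_pres (T : finType) (e : rel T) (P : T -> Prop) x y :
  connect e x y -> P x -> (forall u w, P u -> e u w -> P w) -> P y.
Proof.
move=> /connectP [p pth ->] Px H.
elim: p x pth Px => [|z p IH] x //= /andP [exz pth] Px.
exact: IH pth (H _ _ Px exz).
Qed.

Section Tree.
Variables (n k : nat) (l m : 'I_k -> 'I_n).
Hypothesis Hlm : forall i, (l i < m i)%N.
Hypothesis Htree : is_tree l m.

Definition edge j (u w : 'I_n) := ((u == l j) && (w == m j)) || ((u == m j) && (w == l j)).
Definition endp j (x : 'I_n) := (x == l j) || (x == m j).

Lemma lm_neq i : l i != m i.
Proof. by rewrite neq_ltn Hlm. Qed.

Lemma gadj_sym P : symmetric (gadj l m P).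
Proof.
move=> x y; apply/existsP/existsP => [] [i /andP [Pi H]]; exists i; rewrite Pi /=;
  by case/orP: H => /andP [/eqP -> /eqP ->]; rewrite !eqxx ?orbT.
Qed.

Lemma conn_sym P x y : connect (gadj l m P) x y = connect (gadj l m P) y x.
Proof. exact: (sym_connect_sym (@gadj_sym P)). Qed.

Lemma conn_mono (P Q : pred 'I_k) x y : (forall t, P t -> Q t) ->
  connect (gadj l m P) x y -> connect (gadj l m Q) x y.
Proof.
move=> PQ cxy.
apply: (connect_pres (P := fun w => connect (gadj l m Q) x w)) cxy (connect0 _ _) _.
move=> u w cu /existsP [i /andP [Pi H]]; apply: connect_trans cu (connect1 _).
by apply/existsP; exists i; rewrite PQ.
Qed.

Lemma Gadj_edge u w : Gadj l m u w -> exists j, edge j u w.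
Proof. by case/existsP => i /andP [_ H]; exists i. Qed.

Lemma edge_gadj (P : pred 'I_k) i u w : P i -> edge i u w -> gadj l m P u w.
Proof. by move=> Pi H; apply/existsP; exists i; rewrite Pi. Qed.

Lemma edge_endp j u w : edge j u w -> endp j u && endp j w.
Proof. by case/orP => /andP [/eqP -> /eqP ->]; rewrite /endp !eqxx ?orbT. Qed.

Definition side i v := v \in headC l m i.

Lemma sideE i v : side i v = connect (gadj l m (predC1 i)) (m i) v.
Proof. by rewrite /side /headC inE. Qed.

Lemma side_m i : side i (m i). Proof. by rewrite sideE connect0. Qed.

Lemma side_l i : side i (l i) = false.
Proof. rewrite sideE conn_sym; apply/negbTE; exact: Htree.2. Qed.

Lemma side_conn i u w : connect (gadj l m (predC1 i)) u w -> side i u = side i w.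
Proof.
move=> cuw; rewrite !sideE; apply/idP/idP => H.
  exact: connect_trans H cuw.
by apply: connect_trans H _; rewrite conn_sym.
Qed.

Lemma tail_or_head i v : connect (gadj l m (predC1 i)) (l i) v || side i v.
Proof.
case: Htree => Hc _.
apply: (connect_pres (P := fun w => connect (gadj l m (predC1 i)) (l i) w || side i w)) (Hc (l i) v) _ _.
  by rewrite connect0.
move=> u w Hu /Gadj_edge [j Hj].
case: (eqVneq j i) => [ji|ji].
  subst j; case/orP: Hj => /andP [_ /eqP ->]; by rewrite ?side_m ?orbT ?connect0.
have cuw : connect (gadj l m (predC1 i)) u w.
  by apply: connect1; apply: edge_gadj Hj; rewrite /= ji.
case/orP: Hu => Hu.
  by rewrite (connect_trans Hu cuw).
by rewrite -(side_conn cuw) Hu orbT.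
Qed.

Lemma tailE i v : (v \in tailC l m i) = ~~ side i v.
Proof.
rewrite /tailC inE; case sv: (side i v) => /=.
  apply/negP => H; move: sv; rewrite sideE => H2.
  case: Htree => _ /(_ i) /negP; apply; apply: connect_trans H _; by rewrite conn_sym.
by move: (tail_or_head i v); rewrite sv orbF.
Qed.

Lemma side_step i j u w : edge j u w ->
  side i w = (if j == i then ~~ side i u else side i u).
Proof.
move=> Hj; case: (eqVneq j i) => [ji|ji].
  by subst j; case/orP: Hj => /andP [/eqP -> /eqP ->]; rewrite side_m side_l.
symmetry; apply: side_conn; apply: connect1; apply: edge_gadj Hj; by rewrite /= ji.
Qed.

Lemma side_other i j : j != i -> side i (m j) = side i (l j).
Proof.
move=> ji; rewrite (@side_step i j (l j) (m j)) ?(negbTE ji) //.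
by rewrite /edge !eqxx.
Qed.

Lemma side_endp i j v : j != i -> endp j v -> side i v = side i (l j).
Proof. by move=> ji /orP [] /eqP ->; rewrite ?side_other. Qed.

Lemma endp_eq i x z : endp i x -> endp i z -> side i x = side i z -> x = z.
Proof.
by case/orP=> /eqP ->; case/orP=> /eqP ->; rewrite ?side_l ?side_m.
Qed.

Lemma endp_side i (b : bool) : exists2 x, endp i x & side i x = b.
Proof.
case: b; [exists (m i) | exists (l i)]; by rewrite /endp ?eqxx ?orbT ?side_m ?side_l.
Qed.

Lemma same_side_conn i u w : side i u = side i w -> connect (gadj l m (predC1 i)) u w.
Proof.
move=> suw.
have tu := tail_or_head i u; have tw := tail_or_head i w.
case su: (side i u); move: suw; rewrite su => sw.
  move: su (esym sw); rewrite !sideE => su sw'.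
  by apply: connect_trans sw'; rewrite conn_sym.
rewrite su orbF in tu; rewrite -sw orbF in tw.
by apply: connect_trans tw; rewrite conn_sym.
Qed.


Definition col v := odd #|[set i | side i v]|.

Lemma col_step j u w : edge j u w -> col w = ~~ col u.
Proof.
move=> Hj; rewrite /col (cardsD1 j) [in RHS](cardsD1 j).
have -> : [set i | side i w] :\ j = [set i | side i u] :\ j.
  apply/setP => i; rewrite !inE; case: (eqVneq i j) => //= ij.
  by rewrite (side_step i Hj) eq_sym (negbTE ij).
rewrite !inE (side_step j Hj) eqxx !oddD.
by case: (side j u); rewrite /= ?addNb ?negbK.
Qed.

Definition walk x y (p : seq 'I_n) := path (Gadj l m) x p && (last x p == y).

Lemma walk_cons x y z p : walk x y (z :: p) = Gadj l m x z && walk z y p.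
Proof. by rewrite /walk /= andbA. Qed.

Lemma walk_nil x y : walk x y [::] = (x == y).
Proof. by []. Qed.

Lemma col_walk x y p : walk x y p -> col y = col x (+) odd (size p).
Proof.
elim: p x => [|z p IH] x.
  by rewrite walk_nil => /eqP ->; rewrite addbF.
rewrite walk_cons => /andP [/Gadj_edge [j Hj] wp].
by rewrite (IH _ wp) (col_step Hj) /= addbN addNb.
Qed.

Let Pd x y := fun len => [exists p : len.-tuple 'I_n, path (Gadj l m) x p && (last x p == y)].

Lemma Pd_walk x y p : walk x y p -> Pd x y (size p).
Proof. by move=> w; apply/existsP; exists (in_tuple p). Qed.

Lemma has_Pd x y : has (Pd x y) (iota 0 n).
Proof.
case: Htree => Hc _.
have /connectP [p pth lp] := Hc x y.
case: (shortenP pth) lp => p' pth' up' _ lp'.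
apply/hasP; exists (size p'); last by apply: Pd_walk; rewrite /walk pth' lp' eqxx.
rewrite mem_iota /= add0n.
have := max_card (mem (x :: p')).
by rewrite (card_uniqP up') card_ord /=.
Qed.

Lemma dist_le x y p : walk x y p -> (dist l m x y <= size p)%N.
Proof.
move=> w; rewrite /dist -/(Pd x y).
case: (ltnP (size p) n) => sp.
  rewrite leqNgt; apply/negP => H.
  have := before_find 0 H; rewrite nth_iota // add0n (Pd_walk w) //.
have := has_Pd x y; rewrite has_find size_iota => H.
exact: leq_trans (ltnW H) sp.
Qed.

Lemma dist_walk x y : exists2 p, walk x y p & size p = dist l m x y.
Proof.
have H := has_Pd x y.
have := nth_find 0 H; rewrite has_find size_iota in H.
rewrite nth_iota // add0n => /existsP [t pt].
by exists t; rewrite ?size_tuple.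
Qed.

Lemma dist_odd x y : odd (dist l m x y) = col x (+) col y.
Proof.
have [p w <-] := dist_walk x y.
by rewrite (col_walk w) addbA addbb.
Qed.

Lemma dist_xx x : dist l m x x = 0%N.
Proof. by apply/eqP; rewrite -leqn0 (@dist_le x x [::]) // /walk /=. Qed.

Lemma core1 i x w : endp i x -> side i x = side i w ->
  forall p u, walk u w p -> side i u != side i w ->
  exists2 q, walk x w q & (size q < size p)%N.
Proof.
move=> ex sxw; elim=> [|z p IH] u.
  by rewrite walk_nil => /eqP ->; rewrite eqxx.
rewrite walk_cons => /andP [/Gadj_edge [j Hj] wp] suw.
case: (eqVneq (side i z) (side i w)) => szw.
  have := side_step i Hj; case: (eqVneq j i) => [ji|ji] Hs.
    subst j; have /andP [_ ez] := edge_endp Hj.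
    have xz : x = z by apply: endp_eq ex ez _; rewrite sxw szw.
    by subst z; exists p.
  by move: suw; rewrite -Hs szw eqxx.
have [q wq sq] := IH z wp szw.
by exists q => //=; rewrite ltnS ltnW.
Qed.

Lemma core2 j y : endp j y ->
  forall p u w, walk u w p -> side j u = side j y -> side j w != side j y ->
  exists2 q, walk u y q & (size q < size p)%N.
Proof.
move=> ey; elim=> [|z p IH] u w.
  by rewrite walk_nil => /eqP -> ->; rewrite eqxx.
rewrite walk_cons => /andP [/Gadj_edge [j' Hj] wp] suy swy.
case: (eqVneq (side j z) (side j u)) => szu.
  have [q wq sq] := IH z w wp (etrans szu suy) swy.
  exists (z :: q); last by [].
  rewrite walk_cons wq andbT; apply/existsP; exists j'; exact: Hj.
have := side_step j Hj; case: (eqVneq j' j) => [ji|ji] Hs.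
  subst j'; have /andP [eu _] := edge_endp Hj.
  have uy : u = y by apply: endp_eq eu ey suy.
  by subst u; exists [::]; rewrite ?walk_nil.
by move: szu; rewrite Hs eqxx.
Qed.

Lemma dist_lt1 i x x' w : endp i x -> endp i x' -> x != x' ->
  side i x = side i w -> (dist l m x w < dist l m x' w)%N.
Proof.
move=> ex ex' xx' sxw.
have [p wp <-] := dist_walk x' w.
have sx' : side i x' != side i w.
  rewrite -sxw; apply/negP => /eqP H; move/negP: xx'; apply.
  by apply/eqP; apply: endp_eq ex ex' _.
have [q wq sq] := core1 ex sxw wp sx'.
exact: leq_ltn_trans (dist_le wq) sq.
Qed.

Lemma dist_lt2 j y y' u : endp j y -> endp j y' -> y != y' ->
  side j u = side j y -> (dist l m u y < dist l m u y')%N.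
Proof.
move=> ey ey' yy' suy.
have [p wp <-] := dist_walk u y'.
have sy' : side j y' != side j y.
  apply/negP => /eqP H; move/negP: yy'; apply.
  by apply/eqP; apply: endp_eq ey ey' _.
have [q wq sq] := core2 ey wp suy sy'.
exact: leq_ltn_trans (dist_le wq) sq.
Qed.

Lemma dee_eq i j x x' y y' : j != i -> endp i x -> endp i x' -> x != x' ->
  endp j y -> endp j y' -> y != y' ->
  side i x = side i (l j) -> side j y = side j (l i) ->
  dist_ee l m i j = dist l m x y.
Proof.
move=> ji ex ex' xx' ey ey' yy' sx sy.
have ij : i != j by rewrite eq_sym.
have f1 : (dist l m x y < dist l m x' y)%N.
  by apply: (@dist_lt1 i) => //; rewrite sx (side_endp ji ey).
have f2 : (dist l m x y < dist l m x y')%N.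
  by apply: (@dist_lt2 j) => //; rewrite sy (side_endp ij ex).
have f3 : (dist l m x y' < dist l m x' y')%N.
  by apply: (@dist_lt1 i) => //; rewrite sx (side_endp ji ey').
rewrite /dist_ee /dist_ve.
move: ex ex' ey ey' xx' yy' f1 f2 f3.
move=> /orP [] /eqP -> /orP [] /eqP -> /orP [] /eqP -> /orP [] /eqP ->;
  rewrite ?eqxx // => _ _ f1 f2 f3; lia.
Qed.

Lemma far_conn i j x v : j != i -> side i x != side i (l j) ->
  connect (gadj l m (predC1 i)) x v ->
  connect (gadj l m [pred t | (t != i) && (t != j)]) x v.
Proof.
move=> ji sx cxv.
have := (connect_pres (P := fun w => connect (gadj l m [pred t | (t != i) && (t != j)]) x w
   /\ side i w = side i x) cxv (conj (connect0 _ _) erefl)).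
case; last by [].
move=> u w [cu su] /existsP [e /andP [Pe0 He]].
have Pe : e != i := Pe0.
have swu : side i w = side i u by rewrite (side_step i He) (negbTE Pe).
split; last by rewrite swu.
case: (eqVneq e j) => [ej|ej].
  subst e; have /andP [eu _] := edge_endp He.
  by move: sx; rewrite -su (side_endp ji eu) eqxx.
apply: connect_trans cu (connect1 _); apply: edge_gadj He; by rewrite /= Pe ej.
Qed.

Lemma near_conn i j z w : connect (gadj l m (predC1 i)) z w -> endp j w ->
  connect (gadj l m [pred t | (t != i) && (t != j)]) z (l j) ||
  connect (gadj l m [pred t | (t != i) && (t != j)]) z (m j).
Proof.
move=> czw.
have := (connect_pres (P := fun w => connect (gadj l m [pred t | (t != i) && (t != j)]) z w
   \/ (connect (gadj l m [pred t | (t != i) && (t != j)]) z (l j) ||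
  connect (gadj l m [pred t | (t != i) && (t != j)]) z (m j))) czw (or_introl (connect0 _ _))).
case.
- move=> u w' [cu|H] /existsP [e /andP [Pe0 He]]; last by right.
  have Pe : e != i := Pe0.
  case: (eqVneq e j) => [ej|ej].
    subst e; have /andP [eu _] := edge_endp He.
    by right; case/orP: eu => /eqP <-; rewrite cu ?orbT.
  left; apply: connect_trans cu (connect1 _); apply: edge_gadj He; by rewrite /= Pe ej.
- by move=> czw' /orP [] /eqP <-; rewrite czw' ?orbT.
- done.
Qed.

Lemma compL_eq i j : j != i -> compL l m i j = [set v | side i v != side i (l j)].
Proof.
move=> ji; apply/setP => v; rewrite !inE.
set r := gadj l m [pred t | (t != i) && (t != j)].
have rmono : forall x y, connect r x y -> connect (gadj l m (predC1 i)) x y.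
  by move=> x y; apply: conn_mono => t /andP [].
apply/idP/idP.
  case/andP => /andP [H nl nm]; apply/negP => /eqP svl.
  have [z ez czv] : exists2 z, endp i z & connect r z v.
    by case/orP: H => H; [exists (l i) | exists (m i)]; rewrite /endp ?eqxx ?orbT.
  have szv := side_conn (rmono _ _ czv).
  have czl : connect (gadj l m (predC1 i)) z (l j).
    by apply: same_side_conn; rewrite szv svl.
  have ejl : endp j (l j) by rewrite /endp eqxx.
  have := near_conn czl ejl; rewrite -/r => /orP [] H2.
    by move/negP: nl; apply; apply: connect_trans H2; rewrite /r conn_sym.
  by move/negP: nm; apply; apply: connect_trans H2; rewrite /r conn_sym.
move=> svl.
have [z ez szv] := endp_side i (side i v).
have czv := same_side_conn szv.
have := far_conn ji _ czv; rewrite szv -/r => /(_ svl) crv.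
apply/andP; split; first (apply/andP; split).
- by case/orP: ez => /eqP <-; rewrite crv ?orbT.
- apply/negP => /rmono /side_conn; exact/eqP.
- apply/negP => /rmono /side_conn; rewrite side_other //; exact/eqP.
Qed.

Lemma compL_disj i j : j != i ->
  [set v | side i v != side i (l j)] :&: [set v | side j v != side j (l i)] = set0.
Proof.
move=> ji; have ij : i != j by rewrite eq_sym.
apply/setP => v; rewrite !inE; apply/negP => /andP [svi svj].
have [z ez szv] := endp_side i (side i v).
have czv := same_side_conn szv.
have := far_conn ji _ czv; rewrite szv => /(_ svi) crv.
have : connect (gadj l m (predC1 j)) z v by apply: conn_mono crv => t /andP [].
move/side_conn; rewrite (side_endp ij ez) => H.
by move: svj; rewrite H eqxx.
Qed.

Section Mat.
Variable R : realFieldType.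
Hypothesis Hn : (0 < n)%N.

Definition c v : R := if col v then -1 else 1.
Definition hh i := #|headC l m i|.
Definition Z : 'M[R]_(k, n) :=
  \matrix_(e, v) (c v * c (m e) * ((side e v)%:R - (hh e)%:R / n%:R)).
Definition cv : 'cV[R]_n := \col_v c v.

Lemma n_neq0 : (n%:R : R) != 0.
Proof. by rewrite pnatr_eq0 -lt0n. Qed.

Lemma cc v : c v * c v = 1.
Proof. by rewrite /c; case: col; rewrite ?mulrNN mulr1. Qed.

Lemma c_l j : c (l j) = - c (m j).
Proof.
have e : edge j (l j) (m j) by rewrite /edge !eqxx.
by rewrite /c (col_step e); case: col; rewrite ?opprK.
Qed.

Lemma sum2 (F : 'I_n -> R) a b : a != b ->
  \sum_v F v * (((v == a) || (v == b)) : nat)%:R = F a + F b.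
Proof.
move=> ab; rewrite (bigD1 a) //= eqxx mulr1 (bigD1 b) /=; last by rewrite eq_sym.
rewrite eqxx orbT mulr1 big1 ?addr0 // => v /andP [vb va].
by rewrite (negbTE va) (negbTE vb) mulr0.
Qed.

Lemma sum_ind (A : {set 'I_n}) : \sum_v ((v \in A)%:R : R) = #|A|%:R.
Proof.
rewrite -sum1_card natr_sum [RHS]big_mkcond; apply: eq_bigr => v _.
by case: (v \in A).
Qed.

Lemma ZM : Z *m incidence l m R = 1%:M.
Proof.
apply/matrixP => e f; rewrite !mxE.
under eq_bigr do rewrite !mxE.
rewrite sum2 ?lm_neq // c_l.
case: (eqVneq e f) => [<-|ef].
  rewrite side_l side_m /= mulNr cc; ring.
rewrite side_other 1?eq_sym // /=; ring.
Qed.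

Lemma Mc : (incidence l m R)^T *m cv = 0.
Proof.
apply/matrixP => f z; rewrite !mxE.
under eq_bigr do rewrite !mxE mulrC.
by rewrite sum2 ?lm_neq // c_l addNr.
Qed.

Lemma sum_side e : \sum_v ((side e v)%:R : R) = (hh e)%:R.
Proof. exact: sum_ind. Qed.

Lemma Zc : Z *m cv = 0.
Proof.
apply/matrixP => e z; rewrite !mxE.
have E : forall v, Z e v * cv v z = c (m e) * ((side e v)%:R - (hh e)%:R / n%:R).
  by move=> v; rewrite !mxE mulrC !mulrA cc mul1r.
rewrite (eq_bigr _ (fun v _ => E v)).
rewrite -mulr_sumr sumrB sum_side sumr_const card_ord.
by rewrite -[_ *+ n]mulr_natr divfK ?n_neq0 // subrr mulr0.
Qed.

Lemma ctc : cv^T *m cv = (n%:R : R)%:M.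
Proof.
apply/matrixP => a b; rewrite !ord1 !mxE eqxx /=.
under eq_bigr do rewrite !mxE cc.
by rewrite sumr_const card_ord.
Qed.


Lemma ZZ i j : (Z *m Z^T) i j = c (m i) * c (m j) *
  (#|headC l m i :&: headC l m j|%:R - (hh i)%:R * (hh j)%:R / n%:R).
Proof.
rewrite !mxE.
pose a : R := (hh i)%:R / n%:R; pose b : R := (hh j)%:R / n%:R.
have E : forall v, Z i v * Z^T v j = c (m i) * c (m j) *
   ((v \in headC l m i :&: headC l m j)%:R - b * (side i v)%:R - a * (side j v)%:R + a * b).
  move=> v; rewrite !mxE inE /side -mulnb natrM.
  rewrite (_ : forall (x p q X Y : R), x * p * X * (x * q * Y) = (x * x) * (p * q * (X * Y))); last by move=> *; ring.
  rewrite cc mul1r /a /b; ring.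
rewrite (eq_bigr _ (fun v _ => E v)) -mulr_sumr.
rewrite big_split !sumrB /= -!mulr_sumr sum_ind !sum_side sumr_const card_ord.
rewrite -[_ *+ n]mulr_natr /a /b; congr (_ * _); field; exact: n_neq0.
Qed.

Lemma sign_dist x y : (-1) ^+ (dist l m x y) = c x * c y :> R.
Proof.
rewrite -signr_odd dist_odd /c.
by case: (col x); case: (col y); rewrite /= ?expr0 ?expr1 ?mulrNN ?mulr1 ?mul1r ?mulN1r ?mulrN1.
Qed.

Lemma cardC_R (X : {set 'I_n}) : (#|~: X|%:R : R) = n%:R - #|X|%:R.
Proof. by apply/eqP; rewrite eq_sym subr_eq -natrD addnC cardsC card_ord. Qed.

Lemma headA i (a : bool) : headC l m i =
  if a then ~: [set v | side i v != a] else [set v | side i v != a].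
Proof.
apply/setP => v; rewrite -[v \in headC l m i]/(side i v); case: a; rewrite !inE; by case: (side i v).
Qed.

Lemma tailC_eq i : tailC l m i = ~: headC l m i.
Proof. by apply/setP => v; rewrite in_setC tailE. Qed.

Lemma final_alg (a b : bool) (A B Hi Hj : {set 'I_n}) (p q sx sy : R) :
  A :&: B = set0 -> Hi = (if a then ~: A else A) -> Hj = (if b then ~: B else B) ->
  sx = (if a then p else - p) -> sy = (if b then q else - q) ->
  sx * sy / n%:R * - (#|A| * #|B|)%:R =
  p * q * (#|Hi :&: Hj|%:R - #|Hi|%:R * #|Hj|%:R / n%:R).
Proof.
move=> D -> -> -> ->; have nz := n_neq0.
case: a; case: b.
- rewrite -setCU cardC_R cardsU D cards0 subn0 natrD !cardC_R natrM; field => //.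
- rewrite setIC -setDE cardsD setIC D cards0 subn0 !cardC_R natrM; field => //.
- rewrite -setDE cardsD D cards0 subn0 !cardC_R natrM; field => //.
- rewrite D cards0 natrM; field => //.
Qed.

Lemma Splus_eq : Splus l m R = Z *m Z^T.
Proof.
apply/matrixP => i j; rewrite ZZ mxE.
case: (eqVneq i j) => [<-|ij].
  rewrite /dist_ee /dist_ve dist_xx !min0n expr0 setIid tailC_eq natrM cardC_R cc /hh.
  field; exact: n_neq0.
have ji : j != i by rewrite eq_sym.
rewrite (compL_eq ji) (compL_eq ij).
have [x [x' [ex ex' xx' sx cx]]] : exists x x', [/\ endp i x, endp i x', x != x',
   side i x = side i (l j) & c x = if side i (l j) then c (m i) else - c (m i)].
  case Ea: (side i (l j)); [exists (m i); exists (l i) | exists (l i); exists (m i)];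
   rewrite /endp !eqxx ?orbT ?side_m ?side_l ?c_l; split => //; by rewrite ?lm_neq // eq_sym lm_neq.
have [y [y' [ey ey' yy' sy cy]]] : exists y y', [/\ endp j y, endp j y', y != y',
   side j y = side j (l i) & c y = if side j (l i) then c (m j) else - c (m j)].
  case Ea: (side j (l i)); [exists (m j); exists (l j) | exists (l j); exists (m j)];
   rewrite /endp !eqxx ?orbT ?side_m ?side_l ?c_l; split => //; by rewrite ?lm_neq // eq_sym lm_neq.
rewrite (dee_eq ji ex ex' xx' ey ey' yy' sx sy) sign_dist /hh.
by apply: (final_alg (a := side i (l j)) (b := side j (l i))); rewrite ?compL_disj ?cx ?cy -?headA.
Qed.

End Mat.

End Tree.

Lemma block_inv (R : realFieldType) (k : nat) (M : 'M[R]_(k.+1, k)) (Z : 'M_(k, k.+1))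
  (cv : 'cV_(k.+1)) :
  Z *m M = 1%:M -> M^T *m cv = 0 -> Z *m cv = 0 -> cv^T *m cv = ((k.+1)%:R)%:M ->
  M *m Z = 1%:M - ((k.+1)%:R^-1) *: (cv *m cv^T).
Proof.
move=> ZM Mc Zc ctc.
pose N : 'M[R]_(k.+1, 1 + k) := row_mx cv M.
pose L : 'M[R]_(1 + k, k.+1) := col_mx ((k.+1)%:R^-1 *: cv^T) Z.
have LN : L *m N = 1%:M.
  rewrite mul_col_row -!scalemxAl ctc Zc ZM.
  have -> : cv^T *m M = 0 by rewrite -[cv^T *m M]trmxK trmx_mul trmxK Mc trmx0.
  rewrite scaler0 scale_scalar_mx mulVf ?pnatr_eq0 //.
  by rewrite [RHS]scalar_mx_block.
have := mulmx1C LN; rewrite mul_row_col scalemxAr => H.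
by rewrite -H addrAC subrr add0r.
Qed.

Theorem mainTheorem4 (R : realFieldType) (n : nat) (l m : 'I_n.-1 -> 'I_n)
  (Hn : (0 < n)%N) (Hlm : forall i, (l i < m i)%N) (Htree : is_tree l m) :
  let M := @incidence n n.-1 l m R in
  let S := M^T *m M in
  is_MP_inverse S (@Splus n n.-1 l m R).
Proof.
move: l m Hlm Htree; case: n Hn => [//|k] Hn l m Hlm Htree M S.
have ZM1 := ZM Hlm Htree R.
have MZ := block_inv ZM1 (Mc Hlm Htree R) (Zc l m R Hn) (ctc l m R).
have SX : S *m Splus l m R = 1%:M.
  rewrite (Splus_eq Hlm Htree R Hn) /S /M -mulmxA (mulmxA (incidence l m R)) MZ.
  rewrite mulmxBl mul1mx mulmxBr -scalemxAl -scalemxAr !mulmxA (Mc Hlm Htree R) !mul0mx scaler0 subr0.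
  by rewrite -trmx_mul ZM1 trmx1.
have XS := mulmx1C SX.
split.
- by rewrite SX mul1mx.
- by rewrite XS mul1mx.
- by rewrite SX trmx1.
- by rewrite XS trmx1.
Qed.
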